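(* Let $\mathcal U=(V,\tilde V,W,\tilde W,R)$ be a gradient space such that the map $\mathrm{Sob}(\mathcal U)\to W$, $u\mapsto g_u$, is linear, and let $\mathcal K_0\subseteq\mathrm{Sob}(\mathcal U)$ be a nonempty linear subspace which is closed with respect to the norm of $V$ and is a Poincaré set. Then for every $f\in\mathrm{Sob}(\mathcal U)$ the Dirichlet problem with respect to $\mathcal K_f=\mathcal K_0+f$ has a unique solution.
   Context: Let $\tilde V,\tilde W$ be vector spaces over $\mathbf R$ or $\mathbf C$. A gradient relation is a set $R\subseteq\tilde V\times\tilde W$ such that (G1) if $(u,g)\in R$ and $(u',g')\in R$ then $(u+u',g+g')\in R$; (G2) if $(u,g)\in R$ and $\alpha>0$ then $(\alpha u,\alpha g)\in R$. A gradient space $\mathcal U=(V,\tilde V,W,\tilde W,R)$ consists of vector spaces $\tilde V,\tilde W$, a gradient relation $R\subseteq\tilde V\times\tilde W$, and linear subspaces $V\subseteq\tilde V$, $W\subseteq\tilde W$ such that: (GS1) $V$ is a reflexive Banach space with norm $\|\cdot\|_V$; (GS2) $W$ is a reflexive and strictly convex Banach space with norm $\|\cdot\|_W$; (GS3) if $(u,g)\in R$ with $u\in V$, $g\in W$, then there exists $g'\in W$ with $(-u,g')\in R$; (GS4) if $u,u_i\in V$ and $g,g_i\in W$ with $(u_i,g_i)\in R$ for $i=1,2,\dots$, $\|u-u_i\|_V\to0$ and $\|g-g_i\|_W\to0$, then $(u,g)\in R$. The Sobolev space of $\mathcal U$ is $\mathrm{Sob}(\mathcal U)=\{u\in V:(u,g)\in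 R\text{ for some }g\in W\}$. Each $u\in\mathrm{Sob}(\mathcal U)$ has a unique minimal gradient $g_u\in W$: $(u,g_u)\in R$ and $\|g_u\|_W\le\|g\|_W$ for all $g\in W$ with $(u,g)\in R$. A Poincaré set is a subset $A\subseteq\mathrm{Sob}(\mathcal U)$ for which there is $C>0$ such that $\|u\|_V\le C\|g\|_W$ for all $u\in A$ and all $g\in W$ with $(u,g)\in R$. For $\mathcal K_0\subseteq\mathrm{Sob}(\mathcal U)$ and $f\in\mathrm{Sob}(\mathcal U)$, $\mathcal K_f=\mathcal K_0+f=\{v\in\mathrm{Sob}(\mathcal U):v-f\in\mathcal K_0\}$; a solution of the Dirichlet problem with respect to $\mathcal K_f$ is $u\in\mathcal K_f$ with $\|g_u\|_W=\inf_{v\in\mathcal K_f}\|g_v\|_W$. *)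

(* Defs.v *)
From Stdlib Require Import Reals.
Open Scope R_scope.

Record VecSpace := {
  vs_car :> Type;
  vs_zero : vs_car;
  vs_add : vs_car -> vs_car -> vs_car;
  vs_opp : vs_car -> vs_car;
  vs_scal : R -> vs_car -> vs_car;
  vs_add_assoc : forall x y z, vs_add x (vs_add y z) = vs_add (vs_add x y) z;
  vs_add_comm : forall x y, vs_add x y = vs_add y x;
  vs_add_0 : forall x, vs_add vs_zero x = x;
  vs_add_opp : forall x, vs_add x (vs_opp x) = vs_zero;
  vs_scal_assoc : forall a b x, vs_scal a (vs_scal b x) = vs_scal (a * b) x;
  vs_scal_1 : forall x, vs_scal 1 x = x;
  vs_scal_distr_v : forall a x y, vs_scal a (vs_add x y) = vs_add (vs_scal a x) (vs_scal a y);
  vs_scal_distr_s : forall a b x, vs_scal (a + b) x = vs_add (vs_scal a x) (vs_scal b x)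
}.

Arguments vs_zero {v}.
Arguments vs_add {v}.
Arguments vs_opp {v}.
Arguments vs_scal {v}.

Definition vs_sub {X : VecSpace} (x y : X) : X := vs_add x (vs_opp y).

Definition is_linear {X Y : VecSpace} (f : X -> Y) : Prop :=
  (forall x y, f (vs_add x y) = vs_add (f x) (f y)) /\
  (forall a x, f (vs_scal a x) = vs_scal a (f x)).

Record NormedSpace := {
  ns_vs :> VecSpace;
  ns_norm : ns_vs -> R;
  ns_norm_def : forall x, ns_norm x = 0 -> x = vs_zero;
  ns_norm_scal : forall a x, ns_norm (vs_scal a x) = Rabs a * ns_norm x;
  ns_norm_triangle : forall x y, ns_norm (vs_add x y) <= ns_norm x + ns_norm y
}.

Arguments ns_norm {n}.

Definition converges {X : NormedSpace} (x : nat -> X) (l : X) : Prop :=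
  forall eps, 0 < eps -> exists N, forall n, (N <= n)%nat -> ns_norm (vs_sub (x n) l) < eps.

Definition cauchy {X : NormedSpace} (x : nat -> X) : Prop :=
  forall eps, 0 < eps -> exists N, forall m n, (N <= m)%nat -> (N <= n)%nat ->
    ns_norm (vs_sub (x m) (x n)) < eps.

Definition complete (X : NormedSpace) : Prop :=
  forall x : nat -> X, cauchy x -> exists l, converges x l.

Definition bounded_by {X : NormedSpace} (f : X -> R) (M : R) : Prop :=
  is_linear (Y := Build_VecSpace R 0 Rplus Ropp Rmult
      (fun x y z => eq_sym (Rplus_assoc x y z)) Rplus_comm Rplus_0_l Rplus_opp_r
      (fun a b x => eq_sym (Rmult_assoc a b x)) Rmult_1_l Rmult_plus_distr_l
      Rmult_plus_distr_r) f
  /\ forall x, Rabs (f x) <= M * ns_norm x.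

Definition dual_elt {X : NormedSpace} (f : X -> R) : Prop := exists M, bounded_by f M.

(** Reflexivity: every continuous linear functional [Phi] on the dual [X*]
    (with the dual norm ||f||* = inf {M | bounded_by f M}) is the evaluation
    at some point of [X], i.e. the canonical embedding X -> X** is onto. *)
Definition reflexive (X : NormedSpace) : Prop :=
  forall Phi : (X -> R) -> R,
    (forall f g, dual_elt f -> dual_elt g -> Phi (fun x => f x + g x) = Phi f + Phi g) ->
    (forall a f, dual_elt f -> Phi (fun x => a * f x) = a * Phi f) ->
    (exists C, forall f M, bounded_by f M -> Rabs (Phi f) <= C * M) ->
    exists x : X, forall f, dual_elt f -> Phi f = f x.

Definition strictly_convex (X : NormedSpace) : Prop :=
  forall x y : X, ns_norm x = 1 -> ns_norm y = 1 -> x <> y ->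
    ns_norm (vs_scal (/ 2) (vs_add x y)) < 1.

Definition banach (X : NormedSpace) : Prop := complete X.

Definition gradient_relation {Vt Wt : VecSpace} (Rel : Vt -> Wt -> Prop) : Prop :=
  (forall u g u' g', Rel u g -> Rel u' g' -> Rel (vs_add u u') (vs_add g g')) /\
  (forall u g a, Rel u g -> 0 < a -> Rel (vs_scal a u) (vs_scal a g)).

(** Gradient space (V, Vt, W, Wt, Rel).  The linear subspaces V of Vt and W of Wt
    are given as normed spaces together with injective linear embeddings iV, iW. *)
Definition gradient_space (V : NormedSpace) (Vt : VecSpace) (W : NormedSpace) (Wt : VecSpace)
  (iV : V -> Vt) (iW : W -> Wt) (Rel : Vt -> Wt -> Prop) : Prop :=
  is_linear iV /\ (forall x y, iV x = iV y -> x = y) /\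
  is_linear iW /\ (forall x y, iW x = iW y -> x = y) /\
  gradient_relation Rel /\
  (banach V /\ reflexive V) /\
  (banach W /\ reflexive W /\ strictly_convex W) /\
  (forall (u : V) (g : W), Rel (iV u) (iW g) ->
               exists g' : W, Rel (iV (vs_opp u)) (iW g')) /\
  (forall (u : V) (ui : nat -> V) (g : W) (gi : nat -> W),
               (forall i, Rel (iV (ui i)) (iW (gi i))) ->
               converges ui u -> converges gi g -> Rel (iV u) (iW g)).

Definition Sob {V : NormedSpace} {Vt : VecSpace} {W : NormedSpace} {Wt : VecSpace}
  (iV : V -> Vt) (iW : W -> Wt) (Rel : Vt -> Wt -> Prop) (u : V) : Prop :=
  exists g : W, Rel (iV u) (iW g).

Definition is_min_gradient {V : NormedSpace} {Vt : VecSpace} {W : NormedSpace} {Wt : VecSpace}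
  (iV : V -> Vt) (iW : W -> Wt) (Rel : Vt -> Wt -> Prop) (u : V) (g : W) : Prop :=
  Rel (iV u) (iW g) /\ forall g' : W, Rel (iV u) (iW g') -> ns_norm g <= ns_norm g'.

Definition poincare_set {V : NormedSpace} {Vt : VecSpace} {W : NormedSpace} {Wt : VecSpace}
  (iV : V -> Vt) (iW : W -> Wt) (Rel : Vt -> Wt -> Prop) (A : V -> Prop) : Prop :=
  (forall u, A u -> Sob iV iW Rel u) /\
  exists C, 0 < C /\ forall u (g : W), A u -> Rel (iV u) (iW g) -> ns_norm u <= C * ns_norm g.

Definition Kf {V : NormedSpace} {Vt : VecSpace} {W : NormedSpace} {Wt : VecSpace}
  (iV : V -> Vt) (iW : W -> Wt) (Rel : Vt -> Wt -> Prop) (K0 : V -> Prop) (f : V) (v : V) : Prop :=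
  Sob iV iW Rel v /\ K0 (vs_sub v f).

(** u solves the Dirichlet problem w.r.t. K_f: u in K_f and
    ||g_u|| = inf_{v in K_f} ||g_v|| (the infimum being attained at u). *)
Definition dirichlet_solution {V : NormedSpace} {Vt : VecSpace} {W : NormedSpace} {Wt : VecSpace}
  (iV : V -> Vt) (iW : W -> Wt) (Rel : Vt -> Wt -> Prop) (gr : V -> W)
  (K0 : V -> Prop) (f : V) (u : V) : Prop :=
  Kf iV iW Rel K0 f u /\
  forall v, Kf iV iW Rel K0 f v -> ns_norm (gr u) <= ns_norm (gr v).

(* Main.v *)
Require Import Defs.
From Stdlib Require Import Reals Lra Lia ClassicalEpsilon Classical FunctionalExtensionality.
From mathcomp Require classical_sets boolp.
Open Scope R_scope.

Section VS. End VS.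

Lemma add_0_r (X : VecSpace) (x : X) : vs_add x vs_zero = x.
Proof. rewrite vs_add_comm. apply vs_add_0. Qed.

Lemma add_opp_l (X : VecSpace) (x : X) : vs_add (vs_opp x) x = vs_zero.
Proof. rewrite vs_add_comm. apply vs_add_opp. Qed.

Lemma add_cancel_l (X : VecSpace) (a x y : X) : vs_add a x = vs_add a y -> x = y.
Proof.
  intro H. rewrite <- (vs_add_0 X x), <- (vs_add_0 X y), <- (add_opp_l X a).
  rewrite <- !vs_add_assoc, H. reflexivity.
Qed.

Lemma scal_0_l (X : VecSpace) (x : X) : vs_scal 0 x = vs_zero.
Proof.
  apply (add_cancel_l X (vs_scal 0 x)). rewrite add_0_r, <- vs_scal_distr_s.
  rewrite Rplus_0_l. reflexivity.
Qed.

Lemma scal_0_r (X : VecSpace) (a : R) : vs_scal a (@vs_zero X) = vs_zero.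
Proof.
  rewrite <- (scal_0_l X vs_zero) at 1. rewrite vs_scal_assoc, Rmult_0_r. apply scal_0_l.
Qed.

Lemma opp_unique (X : VecSpace) (x y : X) : vs_add x y = vs_zero -> y = vs_opp x.
Proof. intro H. apply (add_cancel_l X x). rewrite H, vs_add_opp. reflexivity. Qed.

Lemma scal_m1 (X : VecSpace) (x : X) : vs_scal (-1) x = vs_opp x.
Proof.
  apply opp_unique. rewrite <- (vs_scal_1 X x) at 1. rewrite <- vs_scal_distr_s.
  replace (1 + -1) with 0 by ring. apply scal_0_l.
Qed.

Lemma opp_opp (X : VecSpace) (x : X) : vs_opp (vs_opp x) = x.
Proof. symmetry. apply opp_unique. apply add_opp_l. Qed.

Lemma opp_scal (X : VecSpace) (a : R) (x : X) : vs_opp (vs_scal a x) = vs_scal (-a) x.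
Proof. rewrite <- scal_m1, vs_scal_assoc. f_equal. ring. Qed.

Lemma scal_opp (X : VecSpace) (a : R) (x : X) : vs_scal a (vs_opp x) = vs_scal (-a) x.
Proof. rewrite <- scal_m1, vs_scal_assoc. f_equal. ring. Qed.

Lemma opp_add (X : VecSpace) (x y : X) : vs_opp (vs_add x y) = vs_add (vs_opp x) (vs_opp y).
Proof. rewrite <- !scal_m1. apply vs_scal_distr_v. Qed.

Lemma opp_zero (X : VecSpace) : vs_opp (@vs_zero X) = vs_zero.
Proof. rewrite <- scal_m1. apply scal_0_r. Qed.

Lemma add_scal (X : VecSpace) (a b : R) (x : X) : vs_add (vs_scal a x) (vs_scal b x) = vs_scal (a + b) x.
Proof. symmetry. apply vs_scal_distr_s. Qed.

Lemma add_swap4 (X : VecSpace) (a b c d : X) :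
  vs_add (vs_add a b) (vs_add c d) = vs_add (vs_add a c) (vs_add b d).
Proof.
  rewrite <- !vs_add_assoc. f_equal. rewrite !vs_add_assoc. f_equal. apply vs_add_comm.
Qed.

Lemma sub_add_cancel (X : VecSpace) (x y : X) : vs_add y (vs_sub x y) = x.
Proof. unfold vs_sub. rewrite vs_add_comm, <- vs_add_assoc, add_opp_l. apply add_0_r. Qed.

Lemma add_sub_cancel (X : VecSpace) (x y : X) : vs_sub (vs_add y x) y = x.
Proof. unfold vs_sub. rewrite vs_add_comm, vs_add_assoc, add_opp_l. apply vs_add_0. Qed.

Lemma sub_eq0 (X : VecSpace) (x y : X) : vs_sub x y = vs_zero -> x = y.
Proof. unfold vs_sub. intro H. apply opp_unique in H. rewrite <- (opp_opp X x), <- H. apply opp_opp. Qed.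

Lemma norm_zero (X : NormedSpace) : ns_norm (@vs_zero X) = 0.
Proof. rewrite <- (scal_0_l X vs_zero), ns_norm_scal, Rabs_R0. ring. Qed.

Lemma norm_opp (X : NormedSpace) (x : X) : ns_norm (vs_opp x) = ns_norm x.
Proof. rewrite <- scal_m1, ns_norm_scal. assert (Rabs (-1) = 1) as E by (rewrite Rabs_left; lra). rewrite E. ring. Qed.

Lemma norm_nonneg (X : NormedSpace) (x : X) : 0 <= ns_norm x.
Proof.
  pose proof (ns_norm_triangle X x (vs_opp x)) as H.
  rewrite vs_add_opp, norm_zero, norm_opp in H. lra.
Qed.

Lemma sub_opp (X : VecSpace) (x y : X) : vs_sub y x = vs_opp (vs_sub x y).
Proof. unfold vs_sub. rewrite opp_add, opp_opp. apply vs_add_comm. Qed.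

Lemma norm_sub_sym (X : NormedSpace) (x y : X) : ns_norm (vs_sub x y) = ns_norm (vs_sub y x).
Proof. rewrite (sub_opp X x y). symmetry; apply norm_opp. Qed.

Lemma sub_triangle (X : NormedSpace) (x y z : X) :
  ns_norm (vs_sub x z) <= ns_norm (vs_sub x y) + ns_norm (vs_sub y z).
Proof.
  replace (vs_sub x z) with (vs_add (vs_sub x y) (vs_sub y z)). apply ns_norm_triangle.
  unfold vs_sub. rewrite <- vs_add_assoc. f_equal. rewrite vs_add_assoc, add_opp_l. apply vs_add_0.
Qed.

Definition sup_of (E : R -> Prop) : R :=
  match excluded_middle_informative (bound E /\ exists x, E x) with
  | left h => proj1_sig (completeness E (proj1 h) (proj2 h))
  | right _ => 0 end.

Lemma sup_spec E : bound E -> (exists x, E x) -> is_lub E (sup_of E).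
Proof.
  intros Hb He. unfold sup_of. destruct excluded_middle_informative as [h|h].
  - destruct (completeness E (proj1 h) (proj2 h)) as [m Hm]. exact Hm.
  - exfalso; tauto.
Qed.

Lemma sup_le E x : bound E -> E x -> x <= sup_of E.
Proof. intros Hb Hx. apply (sup_spec E Hb (ex_intro _ x Hx)). exact Hx. Qed.

Lemma sup_least E b : (exists x, E x) -> (forall x, E x -> x <= b) -> sup_of E <= b.
Proof. intros He Hb. apply (sup_spec E (ex_intro _ b Hb) He). exact Hb. Qed.

Definition inf_of (E : R -> Prop) : R := - sup_of (fun r => E (-r)).

Lemma inf_le E x : (exists b, forall y, E y -> b <= y) -> E x -> inf_of E <= x.
Proof.
  intros [b Hb] Hx. unfold inf_of.
  assert (-x <= sup_of (fun r => E (-r))); [|lra].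
  apply sup_le. exists (-b). intros r Hr. specialize (Hb _ Hr). lra.
  rewrite Ropp_involutive. exact Hx.
Qed.

Lemma inf_greatest E c : (exists x, E x) -> (forall y, E y -> c <= y) -> c <= inf_of E.
Proof.
  intros [x Hx] Hc. unfold inf_of.
  assert (sup_of (fun r => E (-r)) <= -c); [|lra].
  apply sup_least. exists (-x). rewrite Ropp_involutive. exact Hx.
  intros r Hr. specialize (Hc _ Hr). lra.
Qed.

Lemma inf_approx E eps : (exists b, forall y, E y -> b <= y) -> (exists x, E x) -> 0 < eps ->
  exists x, E x /\ x < inf_of E + eps.
Proof.
  intros Hb He Heps. apply NNPP. intro Hn.
  assert (inf_of E + eps <= inf_of E); [|lra].
  apply inf_greatest; auto. intros y Hy. apply Rnot_lt_le. intro Hlt. apply Hn. exists y. auto.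
Qed.

Definition subsp {X : VecSpace} (S : X -> Prop) : Prop :=
  S vs_zero /\ (forall x y, S x -> S y -> S (vs_add x y)) /\ (forall a x, S x -> S (vs_scal a x)).

Definition lin_on {X : VecSpace} (S : X -> Prop) (g : X -> R) : Prop :=
  (forall x y, S x -> S y -> g (vs_add x y) = g x + g y) /\ (forall a x, S x -> g (vs_scal a x) = a * g x).

Definition sublin_on {X : VecSpace} (S : X -> Prop) (p : X -> R) : Prop :=
  (forall x y, S x -> S y -> p (vs_add x y) <= p x + p y) /\
  (forall t x, 0 < t -> S x -> p (vs_scal t x) <= t * p x).

Lemma lin_zero {X : VecSpace} (E : X -> Prop) g : subsp E -> lin_on E g -> g vs_zero = 0.
Proof.
  intros [H0 _] [_ Hs]. rewrite <- (scal_0_l X vs_zero), Hs by exact H0. ring.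
Qed.

Definition ext_set {X : VecSpace} (E : X -> Prop) (y : X) (x : X) : Prop :=
  exists e t, E e /\ x = vs_add e (vs_scal t y).

Definition ext_fun {X : VecSpace} (E : X -> Prop) (g : X -> R) (y : X) (c : R) (x : X) : R :=
  match excluded_middle_informative (ext_set E y x) with
  | left h => let (e, h2) := constructive_indefinite_description _ h in
              let (t, _) := constructive_indefinite_description _ h2 in g e + t * c
  | right _ => 0 end.

Lemma ext_key {X : VecSpace} (E : X -> Prop) (y e1 e2 : X) t1 t2 :
  vs_add e1 (vs_scal t1 y) = vs_add e2 (vs_scal t2 y) ->
  vs_scal (t1 - t2) y = vs_add (vs_opp e1) e2.
Proof.
  intro H.
  assert (Hf : vs_add (vs_opp e1) (vs_add (vs_add e1 (vs_scal t1 y)) (vs_scal (-t2) y)) =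
               vs_add (vs_opp e1) (vs_add (vs_add e2 (vs_scal t2 y)) (vs_scal (-t2) y))) by (rewrite H; reflexivity).
  rewrite <- !vs_add_assoc, !add_scal in Hf.
  rewrite vs_add_assoc, add_opp_l, vs_add_0 in Hf.
  replace (t2 + - t2) with 0 in Hf by ring. rewrite scal_0_l, add_0_r in Hf.
  replace (t1 + - t2) with (t1 - t2) in Hf by ring. exact Hf.
Qed.

Lemma ext_uniq {X : VecSpace} (E : X -> Prop) (y e1 e2 : X) t1 t2 :
  subsp E -> ~ E y -> E e1 -> E e2 ->
  vs_add e1 (vs_scal t1 y) = vs_add e2 (vs_scal t2 y) -> t1 = t2 /\ e1 = e2.
Proof.
  intros [H0 [Ha Hs]] Hy H1 H2 H.
  pose proof (ext_key E y e1 e2 t1 t2 H) as K.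
  destruct (Req_dec t1 t2) as [Ht|Ht].
  - split; auto. subst t2. rewrite (vs_add_comm X e1), (vs_add_comm X e2) in H.
    apply add_cancel_l in H. exact H.
  - exfalso. apply Hy.
    replace y with (vs_scal (/ (t1 - t2)) (vs_scal (t1 - t2) y)).
    + rewrite K. apply Hs. apply Ha; auto. rewrite <- scal_m1. apply Hs. exact H1.
    + rewrite vs_scal_assoc. rewrite Rinv_l by lra. apply vs_scal_1.
Qed.

Lemma ext_repr {X : VecSpace} (E : X -> Prop) g y c e t :
  subsp E -> ~ E y -> E e -> ext_fun E g y c (vs_add e (vs_scal t y)) = g e + t * c.
Proof.
  intros HE Hy He. unfold ext_fun.
  destruct excluded_middle_informative as [h|h].
  - destruct (constructive_indefinite_description _ h) as [e' h2].
    destruct (constructive_indefinite_description _ h2) as [t' [He' Heq]].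
    destruct (ext_uniq E y e e' t t' HE Hy He He' Heq) as [-> ->]. reflexivity.
  - exfalso. apply h. exists e, t. auto.
Qed.

Lemma one_step {X : VecSpace} (S E : X -> Prop) (p g : X -> R) (y : X) (c : R) :
  subsp S -> sublin_on S p -> subsp E -> (forall x, E x -> S x) -> lin_on E g ->
  (forall x, E x -> g x <= p x) -> S y -> ~ E y ->
  (forall e, E e -> g e + c <= p (vs_add e y)) ->
  (forall e, E e -> g e - c <= p (vs_add e (vs_opp y))) ->
  exists (E' : X -> Prop) (g' : X -> R), subsp E' /\ (forall x, E' x -> S x) /\
    (forall x, E x -> E' x) /\ (forall x, E x -> g' x = g x) /\ lin_on E' g' /\
    (forall x, E' x -> g' x <= p x) /\ E' y /\ g' y = c.
Proof.
  intros HS Hp HE HES Hg Hgp Hy HnE Hc1 Hc2.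
  pose proof HS as [S0 [Sa Ss]]. pose proof HE as [E0 [Ea Es]]. pose proof Hg as [ga gs].
  pose proof Hp as [pa ps].
  exists (ext_set E y), (ext_fun E g y c).
  assert (Hrep : forall e t, E e -> ext_fun E g y c (vs_add e (vs_scal t y)) = g e + t * c)
    by (intros; apply ext_repr; auto).
  assert (HEE : forall x, E x -> x = vs_add x (vs_scal 0 y)) by (intros; rewrite scal_0_l, add_0_r; reflexivity).
  assert (HsubE' : subsp (ext_set E y)).
  { split; [|split].
    - exists vs_zero, 0. split; auto.
    - intros x1 x2 [e1 [t1 [H1 ->]]] [e2 [t2 [H2 ->]]]. exists (vs_add e1 e2), (t1 + t2).
      split; auto. rewrite add_swap4, add_scal. reflexivity.
    - intros a x [e [t [H ->]]]. exists (vs_scal a e), (a * t). split; auto.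
      rewrite vs_scal_distr_v, vs_scal_assoc. reflexivity. }
  split; [exact HsubE'|]. split.
  { intros x [e [t [H ->]]]. apply Sa; auto. }
  split. { intros x Hx. exists x, 0. auto. }
  split. { intros x Hx. rewrite (HEE x Hx) at 1. rewrite Hrep by auto. ring. }
  split.
  { split.
    - intros x1 x2 [e1 [t1 [H1 ->]]] [e2 [t2 [H2 ->]]].
      rewrite add_swap4, add_scal, !Hrep by auto. rewrite ga by auto. ring.
    - intros a x [e [t [H ->]]]. rewrite vs_scal_distr_v, vs_scal_assoc, !Hrep by auto.
      rewrite gs by auto. ring. }
  split.
  { intros x [e [t [H ->]]]. rewrite Hrep by auto.
    assert (Sx : S (vs_add e (vs_scal t y))) by (apply Sa; auto).
    destruct (Rtotal_order t 0) as [Hlt|[Heq|Hgt]].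
    - set (s := - t). assert (Hs0 : 0 < s) by (unfold s; lra).
      set (e1 := vs_scal (/ s) e).
      assert (He1 : E e1) by (apply Es; auto).
      assert (Eq : vs_add e (vs_scal t y) = vs_scal s (vs_add e1 (vs_opp y))).
      { unfold e1. rewrite vs_scal_distr_v, vs_scal_assoc, scal_opp, Rinv_r by lra.
        rewrite vs_scal_1. f_equal. f_equal. unfold s; ring. }
      assert (Eq2 : vs_add e1 (vs_opp y) = vs_scal (/ s) (vs_add e (vs_scal t y))).
      { rewrite Eq, vs_scal_assoc, Rinv_l by lra. rewrite vs_scal_1. reflexivity. }
      pose proof (Hc2 e1 He1) as K. rewrite Eq2 in K.
      pose proof (ps (/ s) _ (Rinv_0_lt_compat _ Hs0) Sx) as K2.
      assert (Hge : g e = s * g e1).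
      { unfold e1. rewrite gs by auto. field. unfold s; lra. }
      rewrite Hge.
      assert (s * (g e1 - c) <= s * (/ s * p (vs_add e (vs_scal t y)))).
      { apply Rmult_le_compat_l; lra. }
      replace (s * (/ s * p (vs_add e (vs_scal t y)))) with (p (vs_add e (vs_scal t y))) in H0 by (field; lra).
      assert (Ht : t * c = -(s * c)) by (unfold s; ring). rewrite Ht. lra.
    - subst t. rewrite scal_0_l, add_0_r. rewrite Rmult_0_l, Rplus_0_r. auto.
    - set (s := t). assert (Hs0 : 0 < s) by (unfold s; lra).
      set (e1 := vs_scal (/ s) e).
      assert (He1 : E e1) by (apply Es; auto).
      assert (Eq : vs_add e (vs_scal t y) = vs_scal s (vs_add e1 y)).
      { unfold e1. rewrite vs_scal_distr_v, vs_scal_assoc, Rinv_r by lra.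
        rewrite vs_scal_1. reflexivity. }
      assert (Eq2 : vs_add e1 y = vs_scal (/ s) (vs_add e (vs_scal t y))).
      { rewrite Eq, vs_scal_assoc, Rinv_l by lra. rewrite vs_scal_1. reflexivity. }
      pose proof (Hc1 e1 He1) as K. rewrite Eq2 in K.
      pose proof (ps (/ s) _ (Rinv_0_lt_compat _ Hs0) Sx) as K2.
      assert (Hge : g e = s * g e1).
      { unfold e1. rewrite gs by auto. field. unfold s; lra. }
      rewrite Hge.
      assert (s * (g e1 + c) <= s * (/ s * p (vs_add e (vs_scal t y)))).
      { apply Rmult_le_compat_l; lra. }
      replace (s * (/ s * p (vs_add e (vs_scal t y)))) with (p (vs_add e (vs_scal t y))) in H0 by (field; lra).
      unfold s in *. lra. }
  assert (Ey : y = vs_add vs_zero (vs_scal 1 y)) by (rewrite vs_scal_1, vs_add_0; reflexivity).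
  split. { exists vs_zero, 1. auto. }
  rewrite Ey at 2. rewrite Hrep by auto. rewrite (lin_zero E g HE Hg). ring.
Qed.

Lemma exists_c {X : VecSpace} (S E : X -> Prop) (p g : X -> R) (y : X) :
  subsp S -> sublin_on S p -> subsp E -> (forall x, E x -> S x) -> lin_on E g ->
  (forall x, E x -> g x <= p x) -> S y ->
  exists c, (forall e, E e -> g e + c <= p (vs_add e y)) /\
            (forall e, E e -> g e - c <= p (vs_add e (vs_opp y))).
Proof.
  intros HS Hp HE HES Hg Hgp Hy.
  pose proof HS as [S0 [Sa Ss]]. pose proof HE as [E0 [Ea Es]]. pose proof Hg as [ga gs].
  pose proof Hp as [pa ps].
  assert (Sny : S (vs_opp y)) by (rewrite <- scal_m1; auto).
  assert (key : forall e e', E e -> E e' -> g e - p (vs_add e (vs_opp y)) <= p (vs_add e' y) - g e').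
  { intros e e' He He'.
    assert (g (vs_add e e') <= p (vs_add (vs_add e (vs_opp y)) (vs_add e' y))).
    { replace (vs_add (vs_add e (vs_opp y)) (vs_add e' y)) with (vs_add e e').
      apply Hgp; auto. rewrite add_swap4, add_opp_l, add_0_r. reflexivity. }
    rewrite ga in H by auto.
    pose proof (pa (vs_add e (vs_opp y)) (vs_add e' y) ltac:(auto) ltac:(auto)). lra. }
  set (A := fun r => exists e, E e /\ r = g e - p (vs_add e (vs_opp y))).
  assert (Hne : exists r, A r) by (exists (g vs_zero - p (vs_add vs_zero (vs_opp y))); exists vs_zero; auto).
  assert (Hb : bound A).
  { exists (p (vs_add vs_zero y) - g vs_zero). intros r [e [He ->]]. apply key; auto. }
  exists (sup_of A). split.
  - intros e He. assert (sup_of A <= p (vs_add e y) - g e); [|lra].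
    apply sup_least; auto. intros r [e' [He' ->]]. apply key; auto.
  - intros e He. assert (g e - p (vs_add e (vs_opp y)) <= sup_of A); [|lra].
    apply sup_le; auto. exists e; auto.
Qed.

Lemma ZLp (T : Type) (t0 : T) (P : T -> T -> Prop) :
  (forall t, P t t) -> (forall r s t, P r s -> P s t -> P r t) ->
  (forall A : T -> Prop, (forall s t, A s -> A t -> P s t \/ P t s) ->
     exists t, forall s, A s -> P s t) ->
  exists t, forall s, P t s -> P s t.
Proof.
  intros Hr Ht Hc.
  destruct (@classical_sets.ZL_preorder T t0 (fun a b => boolp.asbool (P a b))) as [t Ht'].
  - intro t. apply (ssrbool.introT (boolp.asboolP _)). auto.
  - intros r s t H1 H2. apply (ssrbool.introT (boolp.asboolP _)).
    apply (ssrbool.elimT (boolp.asboolP _)) in H1. apply (ssrbool.elimT (boolp.asboolP _)) in H2. eauto.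
  - intros A HA. destruct (Hc A) as [t Hts].
    + intros s t Hs Htt. destruct (HA s t Hs Htt) as [H|H];
        apply (ssrbool.elimT (boolp.asboolP _)) in H; auto.
    + exists t. intros s Hs. apply (ssrbool.introT (boolp.asboolP _)). auto.
  - exists t. intros s Hs. unfold classical_sets.premaximal in Ht'.
    apply (ssrbool.elimT (boolp.asboolP _)). apply Ht'. apply (ssrbool.introT (boolp.asboolP _)). exact Hs.
Qed.

Record Ext {X : VecSpace} (S D : X -> Prop) (p l : X -> R) := mkExt {
  ext_E : X -> Prop; ext_g : X -> R;
  ext_sub : subsp ext_E; ext_S : forall x, ext_E x -> S x; ext_D : forall x, D x -> ext_E x;
  ext_lin : lin_on ext_E ext_g; ext_le : forall x, ext_E x -> ext_g x <= p x;
  ext_l : forall x, D x -> ext_g x = l x }.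

Arguments ext_E {X S D p l}. Arguments ext_g {X S D p l}.
Arguments ext_sub {X S D p l}. Arguments ext_S {X S D p l}. Arguments ext_D {X S D p l}.
Arguments ext_lin {X S D p l}. Arguments ext_le {X S D p l}. Arguments ext_l {X S D p l}.

Definition ext_rel {X : VecSpace} {S D : X -> Prop} {p l : X -> R} (a b : Ext S D p l) : Prop :=
  (forall x, ext_E a x -> ext_E b x) /\ (forall x, ext_E a x -> ext_g a x = ext_g b x).

Definition chain_g {X : VecSpace} {S D : X -> Prop} {p l : X -> R} (A : Ext S D p l -> Prop) (x : X) : R :=
  match excluded_middle_informative (exists s, A s /\ ext_E s x) with
  | left h => ext_g (proj1_sig (constructive_indefinite_description _ h)) x
  | right _ => 0 end.

Theorem hahn_banach {X : VecSpace} (S D : X -> Prop) (p l : X -> R) :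
  subsp S -> sublin_on S p -> subsp D -> (forall x, D x -> S x) -> lin_on D l ->
  (forall x, D x -> l x <= p x) ->
  exists F, lin_on S F /\ (forall x, S x -> F x <= p x) /\ (forall x, D x -> F x = l x).
Proof.
  intros HS Hp HD HDS Hl Hlp.
  pose (t0 := @mkExt X S D p l D l HD HDS (fun x h => h) Hl Hlp (fun x _ => eq_refl)).
  destruct (ZLp (Ext S D p l) t0 ext_rel) as [t Hmax].
  - intro t. split; auto.
  - intros r s t [H1 H2] [H3 H4]. split; auto. intros x Hx. rewrite H2 by auto. auto.
  - intros A HA.
    destruct (classic (exists s, A s)) as [[s0 Hs0]|Hne].
    2:{ exists t0. intros s Hs. exfalso; eauto. }
    set (EU := fun x => exists s, A s /\ ext_E s x).
    assert (agree : forall s x, A s -> ext_E s x -> chain_g A x = ext_g s x).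
    { intros s x Hs Hx. unfold chain_g. destruct excluded_middle_informative as [h|h].
      - destruct (constructive_indefinite_description _ h) as [s' [Hs' Hx']]. simpl.
        destruct (HA s s' Hs Hs') as [[_ H]|[_ H]]; [symmetry|]; auto.
      - exfalso; eauto. }
    assert (common : forall x y, EU x -> EU y -> exists s, A s /\ ext_E s x /\ ext_E s y).
    { intros x y [s1 [A1 H1]] [s2 [A2 H2]]. destruct (HA s1 s2 A1 A2) as [[H _]|[H _]].
      - exists s2; auto. - exists s1; auto. }
    assert (HEU : subsp EU).
    { split; [|split].
      - exists s0. split; auto. apply (ext_sub s0).
      - intros x y Hx Hy. destruct (common x y Hx Hy) as [s [As [Hx' Hy']]].
        exists s. split; auto. apply (ext_sub s); auto.
      - intros a x [s [As Hx]]. exists s. split; auto. apply (ext_sub s); auto. }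
    assert (HlinU : lin_on EU (chain_g A)).
    { split.
      - intros x y Hx Hy. destruct (common x y Hx Hy) as [s [As [Hx' Hy']]].
        rewrite !(agree s) by (auto; apply (ext_sub s); auto). apply (ext_lin s); auto.
      - intros a x [s [As Hx]]. rewrite !(agree s) by (auto; apply (ext_sub s); auto).
        apply (ext_lin s); auto. }
    pose (u := @mkExt X S D p l EU (chain_g A) HEU
                 (fun x h => match h with ex_intro s (conj _ Hx) => ext_S s x Hx end)
                 (fun x h => ex_intro _ s0 (conj Hs0 (ext_D s0 x h)))
                 HlinU
                 (fun x h => match h with ex_intro s (conj As Hx) =>
                    eq_ind_r (fun r => r <= p x) (ext_le s x Hx) (agree s x As Hx) end)
                 (fun x h => eq_trans (agree s0 x Hs0 (ext_D s0 x h)) (ext_l s0 x h))).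
    exists u. intros s Hs. split.
    + intros x Hx. simpl. exists s. auto.
    + intros x Hx. simpl. symmetry. apply agree; auto.
  - exists (ext_g t).
    assert (Hall : forall x, S x -> ext_E t x).
    { intros y Sy. apply NNPP. intro Hny.
      destruct (exists_c S (ext_E t) p (ext_g t) y HS Hp (ext_sub t) (ext_S t) (ext_lin t) (ext_le t) Sy)
        as [c [Hc1 Hc2]].
      destruct (one_step S (ext_E t) p (ext_g t) y c HS Hp (ext_sub t) (ext_S t) (ext_lin t) (ext_le t) Sy Hny Hc1 Hc2)
        as [E' [g' [HE' [HE'S [HEE' [Hgg' [Hlin' [Hle' [HyE' _]]]]]]]]].
      pose (s := @mkExt X S D p l E' g' HE' HE'S (fun x h => HEE' x (ext_D t x h)) Hlin' Hle'
                   (fun x h => eq_trans (Hgg' x (ext_D t x h)) (ext_l t x h))).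
      assert (Hts : ext_rel t s).
      { split. - intros x Hx. simpl. auto. - intros x Hx. simpl. symmetry. auto. }
      destruct (Hmax s Hts) as [H1 _]. apply Hny. apply H1. exact HyE'. }
    split; [|split].
    + split.
      * intros x y Hx Hy. apply (ext_lin t); auto.
      * intros a x Hx. apply (ext_lin t); auto.
    + intros x Hx. apply (ext_le t); auto.
    + apply (ext_l t).
Qed.

Definition distM {X : NormedSpace} (M : X -> Prop) (x : X) : R :=
  inf_of (fun r => exists m, M m /\ r = ns_norm (vs_add x m)).

Definition closedM {X : NormedSpace} (M : X -> Prop) : Prop :=
  forall (w : nat -> X) l, (forall i, M (w i)) -> converges w l -> M l.

Lemma dist_lb {X : NormedSpace} (M : X -> Prop) x m : M m -> distM M x <= ns_norm (vs_add x m).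
Proof.
  intro Hm. apply inf_le. exists 0. intros r [m' [_ ->]]. apply norm_nonneg. exists m; auto.
Qed.

Lemma dist_ge {X : NormedSpace} (M : X -> Prop) x c : subsp M ->
  (forall m, M m -> c <= ns_norm (vs_add x m)) -> c <= distM M x.
Proof.
  intros [H0 _] Hc. apply inf_greatest. exists (ns_norm (vs_add x vs_zero)), vs_zero; auto.
  intros r [m [Hm ->]]. auto.
Qed.

Lemma dist_nonneg {X : NormedSpace} (M : X -> Prop) x : subsp M -> 0 <= distM M x.
Proof. intro HM. apply dist_ge; auto. intros. apply norm_nonneg. Qed.

Lemma dist_approx {X : NormedSpace} (M : X -> Prop) x eps : subsp M -> 0 < eps ->
  exists m, M m /\ ns_norm (vs_add x m) < distM M x + eps.
Proof.
  intros [H0 _] He. destruct (inf_approx (fun r => exists m, M m /\ r = ns_norm (vs_add x m)) eps)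
    as [r [[m [Hm ->]] Hr]]; auto.
  - exists 0. intros r [m' [_ ->]]. apply norm_nonneg.
  - exists (ns_norm (vs_add x vs_zero)), vs_zero; auto.
  - exists m. auto.
Qed.

Lemma le_eps (a b : R) : (forall eps, 0 < eps -> a <= b + eps) -> a <= b.
Proof.
  intro H. apply Rnot_lt_le. intro Hlt. specialize (H ((a - b) / 2) ltac:(lra)). lra.
Qed.

Definition TrueP {X : Type} (x : X) : Prop := True.

Lemma subsp_True (X : VecSpace) : subsp (@TrueP X).
Proof. unfold TrueP; repeat split. Qed.

Lemma dist_sublin {X : NormedSpace} (M : X -> Prop) : subsp M -> sublin_on TrueP (distM M).
Proof.
  intros HM. pose proof HM as [M0 [Ma Ms]]. split.
  - intros u v _ _. apply le_eps. intros eps He.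
    destruct (dist_approx M u (eps/2) HM ltac:(lra)) as [m1 [H1 K1]].
    destruct (dist_approx M v (eps/2) HM ltac:(lra)) as [m2 [H2 K2]].
    pose proof (dist_lb M (vs_add u v) (vs_add m1 m2) (Ma _ _ H1 H2)) as K.
    rewrite add_swap4 in K. pose proof (ns_norm_triangle X (vs_add u m1) (vs_add v m2)). lra.
  - intros t u Ht _. apply le_eps. intros eps He.
    destruct (dist_approx M u (eps/t) HM ltac:(apply Rdiv_lt_0_compat; lra)) as [m [H1 K1]].
    pose proof (dist_lb M (vs_scal t u) (vs_scal t m) (Ms _ _ H1)) as K.
    rewrite <- vs_scal_distr_v, ns_norm_scal, Rabs_pos_eq in K by lra.
    assert (t * ns_norm (vs_add u m) <= t * (distM M u + eps / t)) by (apply Rmult_le_compat_l; lra).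
    replace (t * (distM M u + eps / t)) with (t * distM M u + eps) in H by (field; lra). lra.
Qed.

Definition Rvs : VecSpace := Build_VecSpace R 0 Rplus Ropp Rmult
      (fun x y z => eq_sym (Rplus_assoc x y z)) Rplus_comm Rplus_0_l Rplus_opp_r
      (fun a b x => eq_sym (Rmult_assoc a b x)) Rmult_1_l Rmult_plus_distr_l
      Rmult_plus_distr_r.

Lemma bounded_of_lin {X : NormedSpace} (F : X -> R) M :
  lin_on TrueP F -> (forall x, Rabs (F x) <= M * ns_norm x) -> bounded_by F M.
Proof.
  intros [Ha Hs] Hb. split; [split|]; auto.
  - intros x y. apply Ha; exact I.
  - intros a x. apply Hs; exact I.
Qed.

Lemma sep_core {X : NormedSpace} (M : X -> Prop) x c : subsp M -> ~ M x -> 0 <= c ->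
  (forall m, M m -> c <= ns_norm (vs_add x m)) ->
  exists f, bounded_by f 1 /\ (forall m, M m -> f m = 0) /\ f x = c.
Proof.
  intros HM HnM Hc Hcm. pose proof HM as [M0 [Ma Ms]].
  assert (Hlin0 : lin_on M (fun _ => 0)) by (split; intros; ring).
  destruct (one_step TrueP M (distM M) (fun _ => 0) x c (subsp_True X) (dist_sublin M HM) HM
              (fun _ _ => I) Hlin0 (fun z _ => dist_nonneg M z HM) I HnM) as
    [E' [g' [HE' [_ [HME' [Hg0 [Hlin' [Hle' [HxE' Hgx]]]]]]]]].
  - intros e He. rewrite Rplus_0_l. apply dist_ge; auto. intros m Hm.
    replace (vs_add (vs_add e x) m) with (vs_add x (vs_add e m)).
    apply Hcm; auto. rewrite (vs_add_comm X e x). apply vs_add_assoc.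
  - intros e He. pose proof (dist_nonneg M (vs_add e (vs_opp x)) HM). lra.
  - destruct (hahn_banach TrueP E' (distM M) g' (subsp_True X) (dist_sublin M HM) HE' (fun _ _ => I) Hlin' Hle')
      as [F [HFlin [HFle HFl]]].
    exists F. split; [|split].
    + apply bounded_of_lin; auto. intro v. rewrite Rmult_1_l. apply Rabs_le. split.
      * pose proof (HFle (vs_opp v) I).
        assert (E : F (vs_opp v) = - F v) by (rewrite <- scal_m1, (proj2 HFlin) by exact I; ring).
        pose proof (dist_lb M (vs_opp v) vs_zero M0). rewrite add_0_r, norm_opp in H0. lra.
      * pose proof (HFle v I). pose proof (dist_lb M v vs_zero M0). rewrite add_0_r in H0. lra.
    + intros m Hm. rewrite HFl by auto. apply Hg0. exact Hm.
    + rewrite HFl by auto. exact Hgx.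
Qed.

Lemma norming {X : NormedSpace} (x : X) : exists f, bounded_by f 1 /\ f x = ns_norm x.
Proof.
  destruct (classic (x = vs_zero)) as [->|Hx].
  - exists (fun _ => 0). split.
    + apply bounded_of_lin. split; intros; ring. intro v. rewrite Rabs_R0. pose proof (norm_nonneg X v). lra.
    + rewrite norm_zero. reflexivity.
  - destruct (sep_core (fun v => v = vs_zero) x (ns_norm x)) as [f [Hf [_ Hfx]]].
    + split; [reflexivity|split].
      * intros a b -> ->. apply vs_add_0.
      * intros a v ->. apply scal_0_r.
    + exact Hx.
    + apply norm_nonneg.
    + intros m ->. rewrite add_0_r. lra.
    + exists f. auto.
Qed.

Lemma separation {X : NormedSpace} (M : X -> Prop) x : subsp M -> closedM M -> ~ M x ->
  exists f, bounded_by f 1 /\ (forall m, M m -> f m = 0) /\ f x <> 0.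
Proof.
  intros HM Hcl HnM. pose proof HM as [M0 [Ma Ms]].
  assert (Hpos : 0 < distM M x).
  { destruct (dist_nonneg M x HM) as [H|H]; auto. exfalso. apply HnM.
    assert (Hch : forall n : nat, exists m, M m /\ ns_norm (vs_add x m) < distM M x + / INR (S n)).
    { intro n. apply dist_approx; auto. apply Rinv_0_lt_compat. apply lt_0_INR. lia. }
    pose (mm := fun n => proj1_sig (constructive_indefinite_description _ (Hch n))).
    assert (Hmm : forall n, M (mm n) /\ ns_norm (vs_add x (mm n)) < distM M x + / INR (S n)).
    { intro n. unfold mm. destruct constructive_indefinite_description. simpl. auto. }
    apply (Hcl (fun n => vs_opp (mm n))).
    - intro i. rewrite <- scal_m1. apply Ms. apply Hmm.
    - intros eps He. destruct (archimed_cor1 eps He) as [N [HN HN0]]. exists N. intros n Hn.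
      unfold vs_sub. rewrite vs_add_comm, <- opp_add, norm_opp.
      destruct (Hmm n) as [_ K]. rewrite <- H in K.
      assert (/ INR (S n) <= / INR N).
      { apply Rinv_le_contravar. apply lt_0_INR. lia. apply le_INR. lia. }
      lra. }
  destruct (sep_core M x (distM M x) HM HnM ltac:(lra)) as [f [Hf [Hf0 Hfx]]].
  - intros m Hm. apply dist_lb; auto.
  - exists f. split; auto. split; auto. lra.
Qed.

Definition FunVS (X : Type) : VecSpace.
Proof.
  refine (Build_VecSpace (X -> R) (fun _ => 0) (fun f g x => f x + g x) (fun f x => - f x)
            (fun a f x => a * f x) _ _ _ _ _ _ _ _);
  intros; apply functional_extensionality; intro; ring.
Defined.

Definition Nd {X : NormedSpace} (f : X -> R) : R :=
  sup_of (fun r => exists x, ns_norm x <= 1 /\ r = Rabs (f x)).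

Lemma dual_add_eq {X : NormedSpace} (f : X -> R) x y : dual_elt f -> f (vs_add x y) = f x + f y.
Proof. intros [M [[Ha _] _]]. apply Ha. Qed.

Lemma dual_scal_eq {X : NormedSpace} (f : X -> R) a x : dual_elt f -> f (vs_scal a x) = a * f x.
Proof. intros [M [[_ Hs] _]]. apply Hs. Qed.

Lemma dual_zero_eq {X : NormedSpace} (f : X -> R) : dual_elt f -> f vs_zero = 0.
Proof. intro H. rewrite <- (scal_0_l X vs_zero), dual_scal_eq by auto. ring. Qed.

Lemma Nd_set_bound {X : NormedSpace} (f : X -> R) : dual_elt f ->
  bound (fun r => exists x, ns_norm x <= 1 /\ r = Rabs (f x)).
Proof.
  intros [M [_ Hb]]. exists (Rabs M). intros r [x [Hx ->]].
  eapply Rle_trans. apply Hb. pose proof (norm_nonneg X x).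
  pose proof (Rle_abs M). pose proof (Rabs_pos M).
  assert (M * ns_norm x <= Rabs M * ns_norm x) by (apply Rmult_le_compat_r; lra).
  assert (Rabs M * ns_norm x <= Rabs M * 1) by (apply Rmult_le_compat_l; lra). lra.
Qed.

Lemma Nd_set_ne {X : NormedSpace} (f : X -> R) :
  exists r, (fun r => exists x, ns_norm x <= 1 /\ r = Rabs (f x)) r.
Proof. exists (Rabs (f vs_zero)), vs_zero. rewrite norm_zero. split; auto; lra. Qed.

Lemma Nd_nonneg {X : NormedSpace} (f : X -> R) : dual_elt f -> 0 <= Nd f.
Proof.
  intro H. unfold Nd. eapply Rle_trans; [|apply sup_le]. 2: apply Nd_set_bound; auto.
  2: { exists vs_zero. rewrite norm_zero. split; [lra|reflexivity]. }
  apply Rabs_pos.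
Qed.

Lemma Nd_bound {X : NormedSpace} (f : X -> R) x : dual_elt f -> Rabs (f x) <= Nd f * ns_norm x.
Proof.
  intro Hf. pose proof (norm_nonneg X x) as Hn0.
  destruct Hn0 as [Hn|Hn].
  - set (x' := vs_scal (/ ns_norm x) x).
    assert (Hx' : ns_norm x' = 1).
    { unfold x'. rewrite ns_norm_scal, Rabs_pos_eq. field. lra.
      apply Rlt_le, Rinv_0_lt_compat; auto. }
    assert (Rabs (f x') <= Nd f).
    { apply sup_le. apply Nd_set_bound; auto. exists x'. split; auto; lra. }
    unfold x' in H. rewrite dual_scal_eq, Rabs_mult, Rabs_pos_eq in H by (auto; apply Rlt_le, Rinv_0_lt_compat; auto).
    apply (Rmult_le_compat_r (ns_norm x)) in H; [|lra].
    replace (/ ns_norm x * Rabs (f x) * ns_norm x) with (Rabs (f x)) in H by (field; lra). exact H.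
  - symmetry in Hn. apply ns_norm_def in Hn. subst x. rewrite dual_zero_eq, Rabs_R0, norm_zero by auto. lra.
Qed.

Lemma Nd_le {X : NormedSpace} (f : X -> R) M : bounded_by f M -> 0 <= M -> Nd f <= M.
Proof.
  intros Hb HM. apply sup_least. apply Nd_set_ne. intros r [x [Hx ->]].
  eapply Rle_trans. apply (proj2 Hb). assert (M * ns_norm x <= M * 1) by (apply Rmult_le_compat_l; lra). lra.
Qed.

Lemma dual_add {X : NormedSpace} (f g : X -> R) : dual_elt f -> dual_elt g -> dual_elt (fun x => f x + g x).
Proof.
  intros [M1 [[Ha1 Hs1] Hb1]] [M2 [[Ha2 Hs2] Hb2]]. exists (M1 + M2). split; [split|].
  - intros x y. simpl. rewrite Ha1, Ha2. simpl. ring.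
  - intros a x. simpl. rewrite Hs1, Hs2. simpl. ring.
  - intro x. eapply Rle_trans. apply Rabs_triang. pose proof (Hb1 x). pose proof (Hb2 x). lra.
Qed.

Lemma bounded_scal {X : NormedSpace} (f : X -> R) a M : bounded_by f M -> bounded_by (fun x => a * f x) (Rabs a * M).
Proof.
  intros [[Ha1 Hs1] Hb1]. split; [split|].
  - intros x y. simpl. rewrite Ha1. simpl. ring.
  - intros b x. simpl. rewrite Hs1. simpl. ring.
  - intro x. rewrite Rabs_mult, Rmult_assoc. apply Rmult_le_compat_l. apply Rabs_pos. apply Hb1.
Qed.

Lemma dual_scal {X : NormedSpace} (f : X -> R) a : dual_elt f -> dual_elt (fun x => a * f x).
Proof. intros [M H]. exists (Rabs a * M). apply bounded_scal; auto. Qed.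

Lemma Nd_sub {X : NormedSpace} (f g : X -> R) : dual_elt f -> dual_elt g ->
  Nd (fun x => f x + g x) <= Nd f + Nd g.
Proof.
  intros Hf Hg. apply sup_least. apply Nd_set_ne. intros r [x [Hx ->]].
  eapply Rle_trans. apply Rabs_triang.
  pose proof (Nd_bound f x Hf). pose proof (Nd_bound g x Hg).
  pose proof (Nd_nonneg f Hf). pose proof (Nd_nonneg g Hg). pose proof (norm_nonneg X x).
  assert (Nd f * ns_norm x <= Nd f * 1) by (apply Rmult_le_compat_l; lra).
  assert (Nd g * ns_norm x <= Nd g * 1) by (apply Rmult_le_compat_l; lra). lra.
Qed.

Lemma Nd_hom {X : NormedSpace} (f : X -> R) t : 0 < t -> dual_elt f ->
  Nd (fun x => t * f x) <= t * Nd f.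
Proof.
  intros Ht Hf. apply sup_least. apply Nd_set_ne. intros r [x [Hx ->]].
  rewrite Rabs_mult, Rabs_pos_eq by lra. apply Rmult_le_compat_l; [lra|].
  eapply Rle_trans. apply Nd_bound; auto.
  pose proof (Nd_nonneg f Hf). assert (Nd f * ns_norm x <= Nd f * 1) by (apply Rmult_le_compat_l; lra). lra.
Qed.

Theorem best_approx (X : NormedSpace) (M : X -> Prop) (y : X) :
  reflexive X -> subsp M -> closedM M ->
  exists m0, M m0 /\ forall m, M m -> ns_norm (vs_add y m0) <= ns_norm (vs_add y m).
Proof.
  intros Hrefl HM Hcl. pose proof HM as [M0 [Ma Ms]].
  set (d := distM M y).
  assert (Hd0 : 0 <= d) by (apply dist_nonneg; auto).
  set (S := fun f : FunVS X => dual_elt f).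
  assert (HS : subsp S).
  { split; [|split].
    - exists 0. split; [split|]; intros; simpl; try ring. rewrite Rabs_R0. lra.
    - intros f g Hf Hg. apply dual_add; auto.
    - intros a f Hf. apply dual_scal; auto. }
  set (p := fun f : FunVS X => d * Nd f).
  assert (Hp : sublin_on S p).
  { split.
    - intros f g Hf Hg. unfold p. pose proof (Nd_sub f g Hf Hg).
      assert (d * Nd (vs_add f g) <= d * (Nd f + Nd g)) by (apply Rmult_le_compat_l; auto). lra.
    - intros t f Ht Hf. unfold p. pose proof (Nd_hom f t Ht Hf).
      assert (d * Nd (vs_scal t f) <= d * (t * Nd f)) by (apply Rmult_le_compat_l; auto). lra. }
  set (D := fun f : FunVS X => dual_elt f /\ forall m, M m -> f m = 0).
  assert (HD : subsp D).
  { split; [|split].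
    - split. apply (proj1 HS). intros; reflexivity.
    - intros f g [Hf Hf0] [Hg Hg0]. split. apply dual_add; auto. intros m Hm. simpl. rewrite Hf0, Hg0 by auto. ring.
    - intros a f [Hf Hf0]. split. apply dual_scal; auto. intros m Hm. simpl. rewrite Hf0 by auto. ring. }
  set (l := fun f : FunVS X => f y).
  assert (Hl : lin_on D l) by (split; intros; reflexivity).
  assert (Hlp : forall f, D f -> l f <= p f).
  { intros f [Hf Hf0]. unfold l, p.
    assert (Hall : forall m, M m -> f y <= Nd f * ns_norm (vs_add y m)).
    { intros m Hm. replace (f y) with (f (vs_add y m)) by (rewrite dual_add_eq, (Hf0 m Hm) by auto; ring).
      eapply Rle_trans. apply Rle_abs. apply Nd_bound; auto. }
    pose proof (Nd_nonneg f Hf) as HN.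
    apply Rnot_lt_le. intro Hlt.
    set (eps := (f y - d * Nd f) / (Nd f + 1)).
    assert (He : 0 < eps) by (unfold eps; apply Rdiv_lt_0_compat; lra).
    destruct (dist_approx M y eps HM He) as [m [Hm K]].
    pose proof (Hall m Hm).
    assert (Nd f * ns_norm (vs_add y m) <= Nd f * (d + eps)) by (apply Rmult_le_compat_l; fold d in K; lra).
    assert (Nd f * eps < f y - d * Nd f).
    { replace (f y - d * Nd f) with ((Nd f + 1) * eps) by (unfold eps; field; lra). nra. }
    lra. }
  destruct (hahn_banach S D p l HS Hp HD (fun f h => proj1 h) Hl Hlp) as [F [[HFa HFs] [HFp HFl]]].
  destruct (Hrefl F) as [z Hz].
  - intros f g Hf Hg. exact (HFa f g Hf Hg).
  - intros a f Hf. exact (HFs a f Hf).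
  - exists d. intros f Mb Hb.
    assert (Hf : dual_elt f) by (exists Mb; auto).
    assert (K1 : F f <= d * Nd f) by (apply HFp; auto).
    assert (K2 : F (@vs_scal (FunVS X) (-1) f) <= d * Nd (@vs_scal (FunVS X) (-1) f)) by (apply HFp; apply (proj2 (proj2 HS)); auto).
    rewrite HFs in K2 by auto.
    destruct (Rle_or_lt 0 Mb) as [HMb|HMb].
    + pose proof (Nd_le f Mb Hb HMb).
      pose proof (Nd_le (@vs_scal (FunVS X) (-1) f) (Rabs (-1) * Mb) (bounded_scal f (-1) Mb Hb)).
      assert (Rabs (-1) = 1) as E by (rewrite Rabs_left; lra). rewrite E in H0.
      assert (d * Nd f <= d * Mb) by (apply Rmult_le_compat_l; auto).
      assert (d * Nd (@vs_scal (FunVS X) (-1) f) <= d * (1 * Mb)) by (apply Rmult_le_compat_l; auto; apply H0; lra).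
      apply Rabs_le. lra.
    + assert (Hy0 : ns_norm y = 0).
      { pose proof (proj2 Hb y). pose proof (Rabs_pos (f y)). pose proof (norm_nonneg X y). nra. }
      assert (d = 0).
      { pose proof (dist_lb M y vs_zero M0). rewrite add_0_r, Hy0 in H. fold d in H. lra. }
      rewrite H in K1, K2. rewrite Rmult_0_l in K1, K2. rewrite H, Rmult_0_l. apply Rabs_le. lra.
  - exists (vs_sub z y). split.
    + apply NNPP. intro Hn.
      destruct (separation M (vs_sub z y) HM Hcl Hn) as [f [Hf1 [Hf0 Hfz]]].
      assert (Hf : dual_elt f) by (exists 1; auto).
      assert (E1 : F f = f y) by (apply (HFl f); split; auto).
      rewrite Hz in E1 by auto. apply Hfz. unfold vs_sub.
      rewrite dual_add_eq, <- scal_m1, dual_scal_eq by auto. rewrite E1. ring.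
    + intros m Hm. rewrite sub_add_cancel.
      destruct (norming z) as [f [Hf1 Hfz]].
      assert (Hf : dual_elt f) by (exists 1; auto).
      rewrite <- Hfz, <- Hz by auto.
      eapply Rle_trans. apply HFp. exact Hf. unfold p.
      pose proof (Nd_le f 1 Hf1 ltac:(lra)).
      assert (d * Nd f <= d * 1) by (apply Rmult_le_compat_l; auto).
      pose proof (dist_lb M y m Hm). fold d in H1. lra.
Qed.

Lemma sub_sub_cancel (X : VecSpace) (a b c : X) : vs_sub (vs_sub a c) (vs_sub b c) = vs_sub a b.
Proof.
  unfold vs_sub. rewrite opp_add, opp_opp, add_swap4, add_opp_l, add_0_r. reflexivity.
Qed.

Lemma half_mid (X : VecSpace) (u u' f : X) :
  vs_sub (vs_scal (/2) (vs_add u u')) f = vs_scal (/2) (vs_add (vs_sub u f) (vs_sub u' f)).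
Proof.
  unfold vs_sub. rewrite add_swap4, (vs_scal_distr_v X (/2) (vs_add u u')). f_equal.
  rewrite <- (vs_scal_1 X (vs_opp f)) at 2 3. rewrite add_scal, vs_scal_assoc.
  replace (/2 * (1 + 1)) with 1 by field. rewrite vs_scal_1. reflexivity.
Qed.

Theorem mainTheorem7
  (V : NormedSpace) (Vt : VecSpace) (W : NormedSpace) (Wt : VecSpace)
  (iV : V -> Vt) (iW : W -> Wt) (Rel : Vt -> Wt -> Prop)
  (HU : gradient_space V Vt W Wt iV iW Rel)
  (gr : V -> W)
  (Hgr : forall u, Sob iV iW Rel u -> is_min_gradient iV iW Rel u (gr u))
  (Hlin_add : forall u v, Sob iV iW Rel u -> Sob iV iW Rel v ->
                gr (vs_add u v) = vs_add (gr u) (gr v))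
  (Hlin_scal : forall a u, Sob iV iW Rel u -> gr (vs_scal a u) = vs_scal a (gr u))
  (K0 : V -> Prop)
  (HK0sub : forall u, K0 u -> Sob iV iW Rel u)
  (HK0ne : exists u, K0 u)
  (HK0add : forall u v, K0 u -> K0 v -> K0 (vs_add u v))
  (HK0scal : forall a u, K0 u -> K0 (vs_scal a u))
  (HK0closed : forall (ui : nat -> V) (u : V), (forall i, K0 (ui i)) -> converges ui u -> K0 u)
  (HK0P : poincare_set iV iW Rel K0) :
  forall f, Sob iV iW Rel f ->
    exists u, dirichlet_solution iV iW Rel gr K0 f u /\
      forall u', dirichlet_solution iV iW Rel gr K0 f u' -> u' = u.
Proof.
  intros f Hf.
  destruct HU as [[iVa iVs] [iVinj [[iWa iWs] [iWinj [[G1 G2] [[bV rV] [[bW [rW scW]] [GS3 GS4]]]]]]]].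
  destruct HK0P as [_ [C [HC Hpc]]].
  destruct HK0ne as [k00 Hk00].
  assert (Sob_add : forall a b, Sob iV iW Rel a -> Sob iV iW Rel b -> Sob iV iW Rel (vs_add a b)).
  { intros a b [g1 H1] [g2 H2]. exists (vs_add g1 g2). rewrite iVa, iWa. apply G1; auto. }
  assert (Sob_opp : forall a, Sob iV iW Rel a -> Sob iV iW Rel (vs_opp a)).
  { intros a [g H]. apply (GS3 a g H). }
  assert (Sob_pos : forall t a, 0 < t -> Sob iV iW Rel a -> Sob iV iW Rel (vs_scal t a)).
  { intros t a Ht [g H]. exists (vs_scal t g). rewrite iVs, iWs. apply G2; auto. }
  assert (gr_opp : forall a, Sob iV iW Rel a -> gr (vs_opp a) = vs_opp (gr a)).
  { intros a Ha. rewrite <- !scal_m1. apply Hlin_scal; auto. }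
  assert (gr_sub : forall a b, Sob iV iW Rel a -> Sob iV iW Rel b -> gr (vs_sub a b) = vs_sub (gr a) (gr b)).
  { intros a b Ha Hb. unfold vs_sub. rewrite Hlin_add, gr_opp; auto. }
  assert (K0sub : forall a b, K0 a -> K0 b -> K0 (vs_sub a b)).
  { intros a b Ha Hb. unfold vs_sub. rewrite <- scal_m1. auto. }
  assert (Rel_gr : forall a, Sob iV iW Rel a -> Rel (iV a) (iW (gr a))) by (intros a Ha; apply (Hgr a Ha)).
  assert (gr_min : forall a g, Sob iV iW Rel a -> Rel (iV a) (iW g) -> ns_norm (gr a) <= ns_norm g)
    by (intros a g Ha; apply (Hgr a Ha)).
  set (M := fun w : W => exists k, K0 k /\ w = gr k).
  assert (HM : subsp M).
  { split; [|split].
    - exists (vs_scal 0 k00). split; auto. rewrite Hlin_scal, scal_0_l by auto. reflexivity.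
    - intros x y [k1 [H1 ->]] [k2 [H2 ->]]. exists (vs_add k1 k2). split; auto.
      rewrite Hlin_add; auto.
    - intros a x [k [H ->]]. exists (vs_scal a k). split; auto. rewrite Hlin_scal; auto. }
  assert (Hcl : closedM M).
  { intros w lim Hw Hconv.
    pose (kk := fun n => proj1_sig (constructive_indefinite_description _ (Hw n))).
    assert (Hkk : forall n, K0 (kk n) /\ w n = gr (kk n)).
    { intro n. unfold kk. destruct constructive_indefinite_description. simpl. auto. }
    assert (Hwdiff : forall m n, ns_norm (vs_sub (kk m) (kk n)) <= C * ns_norm (vs_sub (w m) (w n))).
    { intros m n. destruct (Hkk m) as [Km Em]. destruct (Hkk n) as [Kn En].
      apply Hpc. apply K0sub; auto. rewrite Em, En, <- gr_sub by auto. apply Rel_gr. auto. }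
    assert (Hcau : cauchy kk).
    { intros eps He. destruct (Hconv (eps / (2 * C))) as [N HN].
      { apply Rdiv_lt_0_compat; lra. }
      exists N. intros m n Hm Hn.
      pose proof (sub_triangle W (w m) lim (w n)).
      pose proof (HN m Hm). pose proof (HN n Hn). rewrite norm_sub_sym in H1.
      pose proof (Hwdiff m n).
      assert (C * ns_norm (vs_sub (w m) (w n)) < C * (eps / (2 * C) + eps / (2 * C))).
      { apply Rmult_lt_compat_l; lra. }
      replace (C * (eps / (2 * C) + eps / (2 * C))) with eps in H3 by (field; lra). lra. }
    destruct (bV kk Hcau) as [k Hk].
    assert (K0k : K0 k) by (apply (HK0closed kk k); [intro i; apply Hkk|exact Hk]).
    assert (Hbnd : forall n, ns_norm (vs_sub (gr k) (w n)) <= ns_norm (vs_sub lim (w n))).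
    { intro n. destruct (Hkk n) as [Kn En].
      assert (Rel (iV (vs_sub k (kk n))) (iW (vs_sub lim (w n)))).
      { apply (GS4 _ (fun i => vs_sub (kk i) (kk n)) _ (fun i => vs_sub (w i) (w n))).
        - intro i. destruct (Hkk i) as [Ki Ei]. rewrite Ei, En, <- gr_sub by auto. apply Rel_gr. auto.
        - intros eps He. destruct (Hk eps He) as [N HN]. exists N. intros i Hi.
          rewrite sub_sub_cancel. auto.
        - intros eps He. destruct (Hconv eps He) as [N HN]. exists N. intros i Hi.
          rewrite sub_sub_cancel. auto. }
      rewrite En, <- gr_sub by auto. apply gr_min; auto. rewrite <- En. exact H. }
    assert (Heq : gr k = lim).
    { apply sub_eq0. apply ns_norm_def.
      apply Rle_antisym; [|apply norm_nonneg]. apply le_eps. intros eps He.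
      destruct (Hconv (eps / 2)) as [N HN]. lra.
      pose proof (HN N (le_n N)). pose proof (Hbnd N). rewrite (norm_sub_sym W lim (w N)) in H0.
      pose proof (sub_triangle W (gr k) (w N) lim). lra. }
    exists k. auto. }
  destruct (best_approx W M (gr f) rW HM Hcl) as [m0 [[k0 [Hk0 ->]] Hmin]].
  set (u := vs_add f k0).
  assert (Su : Sob iV iW Rel u) by (apply Sob_add; auto).
  assert (Kfu : Kf iV iW Rel K0 f u).
  { split; auto. unfold u. rewrite add_sub_cancel. auto. }
  assert (gru : gr u = vs_add (gr f) (gr k0)) by (apply Hlin_add; auto).
  assert (Hsol : dirichlet_solution iV iW Rel gr K0 f u).
  { split; auto. intros v [Sv Kv]. rewrite gru.
    rewrite <- (sub_add_cancel V v f), Hlin_add by auto. apply Hmin. exists (vs_sub v f). auto. }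
  exists u. split; auto.
  intros u' [[Su' Ku'] Hmin'].
  assert (E1 : ns_norm (gr u) = ns_norm (gr u')).
  { apply Rle_antisym. apply (proj2 Hsol). split; auto. apply Hmin'. auto. }
  assert (Hab : gr u = gr u').
  { apply NNPP. intro Hne.
    set (d := ns_norm (gr u)).
    destruct (norm_nonneg W (gr u)) as [Hd|Hd].
    - fold d in Hd. set (x := vs_scal (/ d) (gr u)). set (y := vs_scal (/ d) (gr u')).
      assert (Hx : ns_norm x = 1).
      { unfold x. rewrite ns_norm_scal, Rabs_pos_eq. fold d. field. lra. apply Rlt_le, Rinv_0_lt_compat; auto. }
      assert (Hy : ns_norm y = 1).
      { unfold y. rewrite ns_norm_scal, Rabs_pos_eq, <- E1. fold d. field. lra. apply Rlt_le, Rinv_0_lt_compat; auto. }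
      assert (Hxy : x <> y).
      { intro Heq. apply Hne. rewrite <- (vs_scal_1 W (gr u)), <- (vs_scal_1 W (gr u')).
        replace 1 with (d * / d) by (field; lra). rewrite <- !vs_scal_assoc. fold x y. rewrite Heq. reflexivity. }
      pose proof (scW x y Hx Hy Hxy) as Hlt.
      set (mid := vs_scal (/2) (vs_add u u')).
      assert (Smid : Sob iV iW Rel mid) by (apply Sob_pos; [lra|]; apply Sob_add; auto).
      assert (Kmid : Kf iV iW Rel K0 f mid).
      { split; [exact Smid|]. unfold mid. rewrite half_mid. apply HK0scal. apply HK0add; [apply Kfu|exact Ku']. }
      assert (grmid : gr mid = vs_scal d (vs_scal (/2) (vs_add x y))).
      { unfold mid. rewrite Hlin_scal, Hlin_add by (auto; apply Sob_add; auto).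
        unfold x, y. rewrite <- vs_scal_distr_v, !vs_scal_assoc. f_equal. field. lra. }
      pose proof (proj2 Hsol mid Kmid). rewrite grmid, ns_norm_scal, Rabs_pos_eq in H by lra.
      fold d in H. assert (d * ns_norm (vs_scal (/ 2) (vs_add x y)) < d * 1) by (apply Rmult_lt_compat_l; lra).
      lra.
    - assert (gr u = vs_zero) by (apply ns_norm_def; auto).
      assert (gr u' = vs_zero) by (apply ns_norm_def; rewrite <- E1; auto).
      apply Hne. congruence. }
  assert (Kd : K0 (vs_sub u' u)).
  { rewrite <- (sub_sub_cancel V u' u f). apply K0sub; [exact Ku'|apply Kfu]. }
  pose proof (Hpc (vs_sub u' u) (gr (vs_sub u' u)) Kd (Rel_gr _ (HK0sub _ Kd))) as Hp.
  rewrite gr_sub, Hab in Hp by auto. unfold vs_sub at 2 in Hp. rewrite vs_add_opp, norm_zero, Rmult_0_r in Hp.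
  apply sub_eq0. apply ns_norm_def. apply Rle_antisym; auto. apply norm_nonneg.
Qed.
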